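(* Let $\mu\in(0,1)$, $\sigma>1$ with $\frac{1}{1-\mu}<\sigma$, and let $v_n>0$, $v_m>0$, $\rho>0$. For each nonzero integer $k$ and $\tau>0$ put $\alpha=(\sigma-1)\tau$, \[ Z_k=\frac{\alpha^2\rho^2\left(1-(-1)^k e^{-\alpha\rho\pi}\right)}{\left(k^2+\alpha^2\rho^2\right)\left(1-e^{-\alpha\rho\pi}\right)},\qquad \overline{G}=\left[\frac{\sigma}{2\pi\rho}\cdot\frac{2\left(1-e^{-\alpha\pi\rho}\right)}{\alpha}\right]^{\frac{1}{1-\sigma}}, \] and \[ M_k(\tau)=\frac{\overline{G}^{-\mu}}{\sigma}\begin{bmatrix} v_n\mu\left(\frac{A(Z_k)}{\sigma}-1\right) & v_n\mu\left(\frac{B(Z_k)}{\sigma}+1\right)\\[2mm] v_m A(Z_k) & v_m B(Z_k)\end{bmatrix}, \] where for $Z\in[0,1]$ \[ \delta(Z)=1-\frac{\mu}{\sigma}Z-\frac{\sigma-1}{\sigma}Z^2,\quad A(Z)=\frac{1+\frac{\mu}{\sigma-1}Z-\left(1+\frac{\mu^2}{\sigma-1}\right)Z^2}{\delta(Z)},\quad B(Z)=-\frac{(\mu Z-1)^2}{\delta(Z)}. \] Let $\tau_k^*>0$ denote the critical point for frequency $k$, namely the value such that the maximal real part of the eigenvalues of $M_k(\tau)$ is positive for $\tau\in(0,\tau_k^* )$, zero at $\tau_k^*$, and negative for $\tau>\tau_k^*$. Then $\tau_k^*<\tau_{k+2}^*$ whenever $k>0$, and $\tau_k^*<\tau_{k-2}^*$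 whenever $k<0$.
   Context: $M_k(\tau)$ is the linearization matrix for the $k$-th Fourier modes of perturbations of the firm and worker share functions around the homogeneous stationary state of a core-periphery model on a circle of radius $\rho$ with firm and worker migration; $\mu$ is the manufacturing expenditure share, $\sigma$ the elasticity of substitution, $\tau$ the transport cost parameter, $v_n,v_m$ migration speeds. Under the stated hypotheses such a critical point $\tau_k^*$ exists (and is uniquely determined by the stated sign pattern) for every nonzero integer $k$. *)

(* Defs.v *)
From Stdlib Require Import Reals ZArith.
From Coquelicot Require Import Coquelicot.
Open Scope R_scope.

Section Model.
Variables (mu sigma vn vm rho : R).

Definition alpha (tau : R) : R := (sigma - 1) * tau.

Definition Zk (k : Z) (tau : R) : R :=
  let a := alpha tau in
  (a ^ 2 * rho ^ 2 * (1 - powerRZ (-1) k * exp (- (a * rho * PI)))) /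
  ((IZR k ^ 2 + a ^ 2 * rho ^ 2) * (1 - exp (- (a * rho * PI)))).

Definition Gbar (tau : R) : R :=
  let a := alpha tau in
  Rpower (sigma / (2 * PI * rho) * (2 * (1 - exp (- (a * PI * rho))) / a))
         (1 / (1 - sigma)).

Definition delta (Z : R) : R := 1 - mu / sigma * Z - (sigma - 1) / sigma * Z ^ 2.
Definition Afun (Z : R) : R :=
  (1 + mu / (sigma - 1) * Z - (1 + mu ^ 2 / (sigma - 1)) * Z ^ 2) / delta Z.
Definition Bfun (Z : R) : R := - ((mu * Z - 1) ^ 2) / delta Z.

Definition Mk11 (k : Z) (tau : R) : R :=
  Rpower (Gbar tau) (- mu) / sigma * (vn * mu * (Afun (Zk k tau) / sigma - 1)).
Definition Mk12 (k : Z) (tau : R) : R :=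
  Rpower (Gbar tau) (- mu) / sigma * (vn * mu * (Bfun (Zk k tau) / sigma + 1)).
Definition Mk21 (k : Z) (tau : R) : R :=
  Rpower (Gbar tau) (- mu) / sigma * (vm * Afun (Zk k tau)).
Definition Mk22 (k : Z) (tau : R) : R :=
  Rpower (Gbar tau) (- mu) / sigma * (vm * Bfun (Zk k tau)).

End Model.

Definition is_eigenvalue2 (a b c d : R) (l : C) : Prop :=
  Cminus (Cmult (Cminus (RtoC a) l) (Cminus (RtoC d) l)) (Cmult (RtoC b) (RtoC c))
  = RtoC 0.

Definition max_re_eig2 (a b c d : R) (s : R) : Prop :=
  (exists l, is_eigenvalue2 a b c d l /\ Re l = s) /\
  (forall l, is_eigenvalue2 a b c d l -> Re l <= s).

Definition max_re_eig_Mk (mu sigma vn vm rho : R) (k : Z) (tau s : R) : Prop :=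
  max_re_eig2 (Mk11 mu sigma vn rho k tau) (Mk12 mu sigma vn rho k tau)
              (Mk21 mu sigma vm rho k tau) (Mk22 mu sigma vm rho k tau) s.

Definition critical_point (mu sigma vn vm rho : R) (k : Z) (taus : R) : Prop :=
  0 < taus /\
  (forall tau s, 0 < tau < taus -> max_re_eig_Mk mu sigma vn vm rho k tau s -> 0 < s) /\
  (forall s, max_re_eig_Mk mu sigma vn vm rho k taus s -> s = 0) /\
  (forall tau s, taus < tau -> max_re_eig_Mk mu sigma vn vm rho k tau s -> s < 0).

(* Main.v *)
Require Import Defs.
From Stdlib Require Import Reals ZArith.
From Coquelicot Require Import Coquelicot.
From Stdlib Require Import Lra Psatz.
Open Scope R_scope.

Lemma eig_eq a b c d x y : is_eigenvalue2 a b c d (x, y) ->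
  (a - x) * (d - x) - y * y - b * c = 0 /\ y * (a + d - 2 * x) = 0.
Proof.
  unfold is_eigenvalue2, Cminus, Cmult, Cplus, Copp, RtoC; simpl.
  intro H; injection H; intros; split; lra.
Qed.

Lemma eig_intro a b c d x y :
  (a - x) * (d - x) - y * y - b * c = 0 -> y * (a + d - 2 * x) = 0 ->
  is_eigenvalue2 a b c d (x, y).
Proof.
  unfold is_eigenvalue2, Cminus, Cmult, Cplus, Copp, RtoC; simpl.
  intros H1 H2. f_equal; lra.
Qed.

Lemma eig_exists a b c d : exists s, max_re_eig2 a b c d s.
Proof.
  set (T := a + d). set (D := a * d - b * c).
  destruct (Rle_lt_dec 0 (T*T - 4*D)) as [Hd|Hd].
  - pose proof (sqrt_pos (T*T-4*D)) as Hp. pose proof (sqrt_sqrt _ Hd) as Hs.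
    set (q := sqrt (T*T-4*D)) in *.
    exists ((T + q)/2). split.
    + exists ((T+q)/2, 0). split; [|reflexivity]. apply eig_intro; unfold T, D in *; nra.
    + intros [x y] Hl. apply eig_eq in Hl as [E1 E2]. simpl.
      destruct (Rmult_integral _ _ E2) as [->|E]; unfold T, D in *; nra.
  - set (q := sqrt (-(T*T-4*D))).
    assert (Hs : q * q = -(T*T-4*D)) by (apply sqrt_sqrt; lra).
    exists (T/2). split.
    + exists (T/2, q/2). split; [|reflexivity]. apply eig_intro; unfold T, D in *; nra.
    + intros [x y] Hl. apply eig_eq in Hl as [E1 E2]. simpl.
      destruct (Rmult_integral _ _ E2) as [->|E]; unfold T, D in *; nra.
Qed.

Lemma eig_sign a b c d s : max_re_eig2 a b c d s ->
  (a*d - b*c < 0 -> 0 < s) /\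
  (a*d - b*c = 0 -> a + d < 0 -> s = 0) /\
  (0 < a*d - b*c -> a + d < 0 -> s < 0).
Proof.
  unfold max_re_eig2; intros [[l [Hl Hre]] Hmax]. destruct l as [x y]. simpl in Hre. subst s.
  apply eig_eq in Hl as [E1 E2].
  split; [|split].
  - intro HD. set (T := a + d). set (D := a * d - b * c).
    assert (Hd : 0 <= T*T - 4*D). { unfold T, D in *. pose proof (Rle_0_sqr (a+d)). unfold Rsqr in *. lra. }
    pose proof (sqrt_pos (T*T-4*D)) as Hp. pose proof (sqrt_sqrt _ Hd) as Hs.
    set (q := sqrt (T*T-4*D)) in *.
    assert (Hq : 0 < (T+q)/2).
    { destruct (Rle_lt_dec q (-T)); [|lra].
      assert (q*q <= T*T) by nra. unfold D in *; nra. }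
    assert (H := Hmax ((T+q)/2, 0)). simpl in H.
    assert ((T+q)/2 <= x); [|lra].
    apply H, eig_intro; unfold T, D in *; nra.
  - intros HD HT. assert (H := Hmax (0,0)). simpl in H.
    assert (0 <= x) by (apply H, eig_intro; lra).
    destruct (Rmult_integral _ _ E2) as [->|E]; nra.
  - intros HD HT.
    destruct (Rmult_integral _ _ E2) as [->|E]; nra.
Qed.

Definition Qf mu sigma Z := mu/(sigma-1) + 2*mu - (1 + mu^2/(sigma-1) + mu^2) * Z.

Lemma model_sign mu sigma vn vm g Z s : 0<mu<1 -> 1<sigma -> 1/(1-mu)<sigma ->
  0<vn -> 0<vm -> 0<g -> 0<Z<1 ->
  max_re_eig2 (g*(vn*mu*(Afun mu sigma Z/sigma-1))) (g*(vn*mu*(Bfun mu sigma Z/sigma+1)))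
              (g*(vm*Afun mu sigma Z)) (g*(vm*Bfun mu sigma Z)) s ->
  (0<s -> 0 < Qf mu sigma Z) /\ (s=0 -> Qf mu sigma Z=0) /\ (s<0 -> Qf mu sigma Z<0).
Proof.
  intros Hmu Hs Hsm Hvn Hvm Hg HZ Hmax.
  assert (Hs1 : 1 < sigma * (1 - mu)).
  { apply (Rmult_lt_compat_r (1-mu)) in Hsm; [|lra].
    replace (1/(1-mu)*(1-mu)) with 1 in Hsm by (field; lra). lra. }
  assert (Hdl : delta mu sigma Z = (sigma - mu*Z - (sigma-1)*Z^2)/sigma)
    by (unfold delta; field; lra).
  assert (HmZ : mu*Z < 1) by nra.
  assert (HN : 0 < sigma - mu*Z - (sigma-1)*Z^2).
  { assert (0 < (sigma-1)*((1-Z)*(1+Z))) by (apply Rmult_lt_0_compat; nra).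
    replace (sigma - mu*Z - (sigma-1)*Z^2) with ((sigma-1)*((1-Z)*(1+Z)) + (1 - mu*Z)) by ring.
    lra. }
  set (dl := delta mu sigma Z) in *.
  assert (Hdp : 0 < dl) by (rewrite Hdl; apply Rdiv_lt_0_compat; lra).
  set (u := mu/(sigma-1)). set (w := mu^2/(sigma-1)).
  assert (HA : Afun mu sigma Z * dl = 1 + u*Z - (1+w)*Z^2)
    by (unfold Afun; fold dl; fold u w; field; lra).
  assert (HB : Bfun mu sigma Z * dl = - ((mu*Z-1)^2))
    by (unfold Bfun; fold dl; field; lra).
  assert (HQ : Qf mu sigma Z = u + 2*mu - (1 + w + mu^2) * Z) by reflexivity.
  set (A := Afun mu sigma Z) in *. set (B := Bfun mu sigma Z) in *.
  set (Q := Qf mu sigma Z) in *.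
  assert (HAB : (A + B) * dl = Z * Q) by (rewrite HQ; nra).
  assert (Hdet : g*(vn*mu*(A/sigma-1)) * (g*(vm*B)) - g*(vn*mu*(B/sigma+1)) * (g*(vm*A))
                 = - (g*g*vn*mu*vm) * (A+B)) by (field; lra).
  assert (HK : 0 < g*g*vn*mu*vm).
  { repeat apply Rmult_lt_0_compat; lra. }
  assert (Htr : (A + B <= 0) -> g*(vn*mu*(A/sigma-1)) + g*(vm*B) < 0).
  { intro Hle.
    assert (HBn : B < 0).
    { assert (0 < (mu*Z-1)^2).
      { replace ((mu*Z-1)^2) with ((1-mu*Z)*(1-mu*Z)) by ring. apply Rmult_lt_0_compat; lra. }
      destruct (Rlt_le_dec B 0); [auto|]. assert (0 <= B*dl) by (apply Rmult_le_pos; lra). lra. }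
    assert (HBs : - B < sigma).
    { assert (sigma*dl - (mu*Z-1)^2 > 0).
      { rewrite Hdl. replace (sigma * ((sigma - mu * Z - (sigma - 1) * Z ^ 2) / sigma))
          with (sigma - mu * Z - (sigma - 1) * Z ^ 2) by (field; lra).
        assert (0 < (sigma-1)*((1-Z)*(1+Z))) by (apply Rmult_lt_0_compat; nra).
        assert (0 < (mu*Z)*(1-mu*Z)) by (apply Rmult_lt_0_compat; nra).
        replace (sigma - mu * Z - (sigma - 1) * Z ^ 2 - (mu * Z - 1) ^ 2)
          with ((sigma-1)*((1-Z)*(1+Z)) + (mu*Z)*(1-mu*Z)) by ring. lra. }
      assert (0 < (sigma + B) * dl) by lra.
      destruct (Rlt_le_dec 0 (sigma+B)); [lra|].
      assert ((sigma+B)*dl <= 0) by (apply Rmult_le_0_r; lra). lra. }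
    assert (A/sigma - 1 < 0).
    { apply Rlt_minus. apply (Rmult_lt_reg_r sigma); [lra|].
      replace (A/sigma*sigma) with A by (field; lra). lra. }
    assert (0 < g*(vn*mu)) by (repeat apply Rmult_lt_0_compat; lra).
    assert (0 < g*vm) by (repeat apply Rmult_lt_0_compat; lra).
    nra. }
  apply eig_sign in Hmax as [S1 [S2 S3]]. rewrite Hdet in S1, S2, S3.
  assert (Q > 0 -> A + B > 0) by (intro; nra).
  assert (Q = 0 -> A + B = 0) by (intro; nra).
  assert (Q < 0 -> A + B < 0) by (intro; nra).
  destruct (Rtotal_order Q 0) as [Hq|[Hq|Hq]].
  - assert (s < 0) by (apply S3; [nra| apply Htr; nra]). split; [|split]; intros; lra.
  - assert (s = 0) by (apply S2; [nra| apply Htr; nra]). split; [|split]; intros; lra.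
  - assert (0 < s) by (apply S1; nra). split; [|split]; intros; lra.
Qed.

Lemma pm1 k : powerRZ (-1) k = 1 \/ powerRZ (-1) k = -1.
Proof.
  assert (H : powerRZ (-1) k * powerRZ (-1) k = 1).
  { rewrite <- powerRZ_mult. replace (-1 * -1) with 1 by ring. apply powerRZ_R1. }
  assert ((powerRZ (-1) k - 1) * (powerRZ (-1) k + 1) = 0) by (ring_simplify; lra).
  destruct (Rmult_integral _ _ H0); [left|right]; lra.
Qed.

Lemma pm2 k : powerRZ (-1) (k + 2) = powerRZ (-1) k.
Proof.
  rewrite powerRZ_add by lra. simpl. ring.
Qed.

Lemma pm2' k : powerRZ (-1) (k - 2) = powerRZ (-1) k.
Proof.
  replace k with ((k - 2) + 2)%Z at 2 by lia. now rewrite pm2.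
Qed.

Lemma ksq k : (k <> 0)%Z -> 1 <= IZR k ^ 2.
Proof.
  intro Hk. destruct (Z.lt_ge_cases 0 k).
  - assert (1 <= IZR k) by (apply IZR_le; lia). nra.
  - assert (IZR k <= -1) by (apply IZR_le; lia). nra.
Qed.

Lemma exp_big x : 0 < x -> 1 + x * x / 4 < exp x.
Proof.
  intro Hx. replace (exp x) with (exp (x/2) * exp (x/2))
    by (rewrite <- exp_plus; f_equal; field).
  assert (1 + x/2 < exp (x/2)) by (apply exp_ineq1; lra).
  nra.
Qed.

Lemma Zk_gen sigma rho tau : 1 < sigma -> 0 < rho -> 0 < tau ->
  exists N e, 0 < N /\ 0 < e < 1 /\ e * (2 * N + 1) < 1 /\ forall k,
    Zk sigma rho k tau = N * (1 - powerRZ (-1) k * e) / ((IZR k ^ 2 + N) * (1 - e)).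
Proof.
  intros Hs Hr Ht. unfold Zk. set (a := alpha sigma tau).
  assert (Ha : 0 < a) by (unfold a, alpha; apply Rmult_lt_0_compat; lra).
  exists (a^2*rho^2), (exp (- (a * rho * PI))).
  pose proof PI2_3_2 as HPI.
  assert (Hx : 0 < a * rho * PI). { apply Rmult_lt_0_compat. apply Rmult_lt_0_compat. exact Ha. exact Hr. lra. }
  assert (HN : 0 < a^2*rho^2) by (apply Rmult_lt_0_compat; apply pow_lt; lra).
  split; [exact HN|]. split; [split|split].
  - apply exp_pos.
  - rewrite <- exp_0. apply exp_increasing. lra.
  - rewrite exp_Ropp. pose proof (exp_big _ Hx) as HE.
    assert (HE' : 1 + 2 * (a^2*rho^2) < exp (a*rho*PI)).
    { assert ((a*rho*PI)*(a*rho*PI)/4 >= 2 * (a^2*rho^2)); [|lra].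
      replace ((a*rho*PI)*(a*rho*PI)/4) with ((a^2*rho^2) * (PI*PI/4)) by (field).
      assert (PI*PI/4 >= 2) by nra. nra. }
    pose proof (exp_pos (a*rho*PI)).
    apply (Rmult_lt_reg_r (exp (a*rho*PI))); [lra|].
    replace (/ exp (a * rho * PI) * (2 * (a ^ 2 * rho ^ 2) + 1) * exp (a * rho * PI))
      with (2 * (a ^ 2 * rho ^ 2) + 1) by (field; lra). lra.
  - intro k. reflexivity.
Qed.

Lemma Zk_bounds sigma rho k tau : 1 < sigma -> 0 < rho -> (k <> 0)%Z -> 0 < tau ->
  0 < Zk sigma rho k tau < 1.
Proof.
  intros Hs Hr Hk Ht.
  destruct (Zk_gen sigma rho tau Hs Hr Ht) as (N & e & HN & He & Hne & E).
  rewrite E.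
  pose proof (ksq k Hk) as Hk2.
  assert (Hden : 0 < (IZR k ^ 2 + N) * (1 - e)) by (apply Rmult_lt_0_compat; lra).
  destruct (pm1 k) as [-> | ->].
  - split.
    + apply Rdiv_lt_0_compat; [apply Rmult_lt_0_compat|]; lra.
    + apply (Rmult_lt_reg_r _ _ _ Hden).
      replace (N * (1 - 1 * e) / ((IZR k ^ 2 + N) * (1 - e)) * ((IZR k ^ 2 + N) * (1 - e)))
        with (N * (1 - 1 * e)) by (field; lra). nra.
  - split.
    + apply Rdiv_lt_0_compat; [apply Rmult_lt_0_compat|]; lra.
    + apply (Rmult_lt_reg_r _ _ _ Hden).
      replace (N * (1 - -1 * e) / ((IZR k ^ 2 + N) * (1 - e)) * ((IZR k ^ 2 + N) * (1 - e)))
        with (N * (1 - -1 * e)) by (field; lra).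
      assert ((1 + N) * (1 - e) <= (IZR k ^ 2 + N) * (1 - e)) by (apply Rmult_le_compat_r; lra).
      nra.
Qed.

Lemma Zk_lt sigma rho k k' tau : 1 < sigma -> 0 < rho -> (k <> 0)%Z -> (k' <> 0)%Z -> 0 < tau ->
  IZR k ^ 2 < IZR k' ^ 2 -> powerRZ (-1) k' = powerRZ (-1) k ->
  Zk sigma rho k' tau < Zk sigma rho k tau.
Proof.
  intros Hs Hr Hk Hk' Ht Hlt Hp.
  destruct (Zk_gen sigma rho tau Hs Hr Ht) as (N & e & HN & He & Hne & E).
  rewrite !E, Hp. pose proof (ksq k Hk) as Hk2.
  assert (Hnum : 0 < N * (1 - powerRZ (-1) k * e))
    by (destruct (pm1 k) as [-> | ->]; apply Rmult_lt_0_compat; lra).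
  unfold Rdiv. apply Rmult_lt_compat_l; [exact Hnum|].
  apply Rinv_lt_contravar.
  - apply Rmult_lt_0_compat; apply Rmult_lt_0_compat; lra.
  - apply Rmult_lt_compat_r; lra.
Qed.

Lemma Q_anti mu sigma Z1 Z2 : 1 < sigma -> Z2 < Z1 -> Qf mu sigma Z1 < Qf mu sigma Z2.
Proof.
  intros Hs HZ. unfold Qf.
  assert (0 <= mu^2/(sigma-1)) by (apply Rdiv_le_0_compat; [apply pow2_ge_0|lra]).
  assert (0 <= mu^2) by apply pow2_ge_0.
  assert (0 < (1 + mu ^ 2 / (sigma - 1) + mu ^ 2) * (Z1 - Z2)) by (apply Rmult_lt_0_compat; lra).
  lra.
Qed.

Lemma sign_Mk mu sigma vn vm rho k tau s : 0<mu<1 -> 1<sigma -> 1/(1-mu)<sigma ->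
  0<vn -> 0<vm -> 0<rho -> (k <> 0)%Z -> 0 < tau ->
  max_re_eig_Mk mu sigma vn vm rho k tau s ->
  let Q := Qf mu sigma (Zk sigma rho k tau) in
  (0<s -> 0 < Q) /\ (s=0 -> Q=0) /\ (s<0 -> Q<0).
Proof.
  intros. unfold max_re_eig_Mk, Mk11, Mk12, Mk21, Mk22 in *.
  apply (model_sign mu sigma vn vm (Rpower (Gbar sigma rho tau) (-mu)/sigma) (Zk sigma rho k tau) s); auto.
  - unfold Rpower. apply Rdiv_lt_0_compat; [apply exp_pos|lra].
  - apply Zk_bounds; auto.
Qed.

Lemma core mu sigma vn vm rho k k' tk tk' : 0<mu<1 -> 1<sigma -> 1/(1-mu)<sigma ->
  0<vn -> 0<vm -> 0<rho -> (k <> 0)%Z -> (k' <> 0)%Z ->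
  (forall tau, 0 < tau -> Zk sigma rho k' tau < Zk sigma rho k tau) ->
  critical_point mu sigma vn vm rho k tk -> critical_point mu sigma vn vm rho k' tk' -> tk < tk'.
Proof.
  intros Hmu Hs Hsm Hvn Hvm Hr Hk Hk' HZ [P1 [A1 [B1 C1]]] [P2 [A2 [B2 C2]]].
  destruct (Rlt_le_dec tk tk') as [|Hle]; [assumption|exfalso].
  destruct Hle as [Hlt|Heq].
  - set (tau := (tk + tk')/2).
    assert (Ht : 0 < tau) by (unfold tau; lra).
    destruct (eig_exists (Mk11 mu sigma vn rho k tau) (Mk12 mu sigma vn rho k tau)
               (Mk21 mu sigma vm rho k tau) (Mk22 mu sigma vm rho k tau)) as [s1 Hs1].
    destruct (eig_exists (Mk11 mu sigma vn rho k' tau) (Mk12 mu sigma vn rho k' tau)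
               (Mk21 mu sigma vm rho k' tau) (Mk22 mu sigma vm rho k' tau)) as [s2 Hs2].
    assert (0 < s1) by (apply (A1 tau); [unfold tau; lra| exact Hs1]).
    assert (s2 < 0) by (apply (C2 tau); [unfold tau; lra| exact Hs2]).
    destruct (sign_Mk mu sigma vn vm rho k tau s1 Hmu Hs Hsm Hvn Hvm Hr Hk Ht Hs1) as [Q1 _].
    destruct (sign_Mk mu sigma vn vm rho k' tau s2 Hmu Hs Hsm Hvn Hvm Hr Hk' Ht Hs2) as [_ [_ Q2]].
    pose proof (Q_anti mu sigma _ _ Hs (HZ tau Ht)).
    specialize (Q1 H). specialize (Q2 H0). lra.
  - subst tk'.
    destruct (eig_exists (Mk11 mu sigma vn rho k tk) (Mk12 mu sigma vn rho k tk)
               (Mk21 mu sigma vm rho k tk) (Mk22 mu sigma vm rho k tk)) as [s1 Hs1].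
    destruct (eig_exists (Mk11 mu sigma vn rho k' tk) (Mk12 mu sigma vn rho k' tk)
               (Mk21 mu sigma vm rho k' tk) (Mk22 mu sigma vm rho k' tk)) as [s2 Hs2].
    pose proof (B1 _ Hs1). pose proof (B2 _ Hs2).
    destruct (sign_Mk mu sigma vn vm rho k tk s1 Hmu Hs Hsm Hvn Hvm Hr Hk P1 Hs1) as [_ [Q1 _]].
    destruct (sign_Mk mu sigma vn vm rho k' tk s2 Hmu Hs Hsm Hvn Hvm Hr Hk' P1 Hs2) as [_ [Q2 _]].
    pose proof (Q_anti mu sigma _ _ Hs (HZ tk P1)).
    specialize (Q1 H). specialize (Q2 H0). lra.
Qed.

Theorem theorem1 (mu sigma vn vm rho : R) :
  0 < mu < 1 -> 1 < sigma -> 1 / (1 - mu) < sigma ->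
  0 < vn -> 0 < vm -> 0 < rho ->
  forall (k : Z) (tk tk' : R), (k <> 0)%Z ->
  ((0 < k)%Z -> critical_point mu sigma vn vm rho k tk ->
     critical_point mu sigma vn vm rho (k + 2) tk' -> tk < tk') /\
  ((k < 0)%Z -> critical_point mu sigma vn vm rho k tk ->
     critical_point mu sigma vn vm rho (k - 2) tk' -> tk < tk').
Proof.
  intros Hmu Hs Hsm Hvn Hvm Hr k tk tk' Hk. split; intros Hk0 C1 C2.
  - apply (core mu sigma vn vm rho k (k+2) tk tk'); auto; [lia|]. intros tau Ht.
    apply Zk_lt; auto; [lia| |apply pm2].
    rewrite plus_IZR. assert (0 < IZR k) by (apply IZR_lt; lia).
    replace ((IZR k + IZR 2) ^ 2) with (IZR k ^ 2 + 4 * IZR k + 4) by ring. lra.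
  - apply (core mu sigma vn vm rho k (k-2) tk tk'); auto; [lia|]. intros tau Ht.
    apply Zk_lt; auto; [lia| |apply pm2'].
    rewrite minus_IZR. assert (IZR k < 0) by (apply IZR_lt; lia).
    replace ((IZR k - IZR 2) ^ 2) with (IZR k ^ 2 - 4 * IZR k + 4) by ring. lra.
Qed.
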